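(* Every subquotient (in the category of $\mathcal{D}_{\mathbb{A}^n_{\mathbb{C}}}$-modules) of a linear module on $\mathbb{A}^n_{\mathbb{C}}$ is a linear module.
   Context: All $\mathcal{D}$-modules are algebraic. For a finite-dimensional $\mathbb{C}$-vector space $E$ and a linear form $\varphi:E\to\mathbb{C}$, let $\mathcal{E}^{\varphi}$ denote the $\mathcal{D}_E$-module $(\mathcal{O}_E, d+d\varphi)$. A \emph{linear module on $E$} is a $\mathcal{D}_E$-module isomorphic to a finite direct sum of modules of the form $\mathcal{E}^{\varphi}$ with $\varphi$ linear forms on $E$. *)

(* Defs.v *)
From HB Require Import structures.
From mathcomp Require Import all_boot all_algebra.
From mathcomp Require Import complex.
From mathcomp Require Import Rstruct.
From mathcomp Require Import mpoly.

Set Implicit Arguments.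
Unset Strict Implicit.
Unset Printing Implicit Defensive.

Import GRing.Theory.
Local Open Scope ring_scope.

Definition CC : numClosedFieldType := (Rdefinitions.R)[i].

Definition lin (U V : lmodType CC) (f : U -> V) : Prop :=
  forall (a : CC) (u v : U), f (a *: u + v) = a *: f u + f v.

(* A D-module on A^n_C: a C-vector space M with linear operators X_i
   (multiplication by the coordinate x_i) and D_i (action of d/dx_i)
   satisfying the Weyl algebra relations. *)
Definition is_Dmodule (n : nat) (M : lmodType CC)
    (X D : 'I_n -> M -> M) : Prop :=
  [/\ forall i, lin (X i),
      forall i, lin (D i),
      forall i j m, X i (X j m) = X j (X i m),
      forall i j m, D i (D j m) = D j (D i m) &
      forall i j m, D i (X j m) - X j (D i m) = (i == j)%:R *: m].

Definition is_Dhom (n : nat) (M : lmodType CC) (XM DM : 'I_n -> M -> M)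
    (N : lmodType CC) (XN DN : 'I_n -> N -> N) (f : M -> N) : Prop :=
  [/\ lin f,
      forall i m, f (XM i m) = XN i (f m) &
      forall i m, f (DM i m) = DN i (f m)].

(* The module  E^{phi_1} (+) ... (+) E^{phi_k}  where phi_j are linear forms
   (homogeneous polynomials of degree 1) : the underlying space is O^k with
   O = C[x_1..x_n]; x_i acts by multiplication and d_i acts on the j-th
   component as  d/dx_i + d(phi_j)/dx_i  (i.e. the connection d + d phi_j). *)
Definition LinSum (n k : nat) := {ffun 'I_k -> {mpoly CC[n]}}.

Definition LinX (n k : nat) (i : 'I_n) (p : LinSum n k) : LinSum n k :=
  [ffun j => 'X_i * p j].

Definition LinD (n k : nat) (phi : 'I_k -> {mpoly CC[n]}) (i : 'I_n)
    (p : LinSum n k) : LinSum n k :=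
  [ffun j => mderiv i (p j) + mderiv i (phi j) * p j].

Definition is_linear_module (n : nat) (M : lmodType CC)
    (X D : 'I_n -> M -> M) : Prop :=
  exists (k : nat) (phi : 'I_k -> {mpoly CC[n]}) (f : LinSum n k -> M),
    [/\ forall j, phi j \is 1.-homog,
        is_Dhom (@LinX n k) (LinD phi) X D f &
        bijective f].

(* M is a subquotient of the D-module L: there are D-submodules N' <= N of L
   with M isomorphic to N/N'.  Equivalently (and this is how we phrase it),
   there is a D-submodule N of L and a surjective D-module morphism N ->> M
   (its kernel being N'). *)
Definition is_Dsubmodule (n : nat) (L : lmodType CC) (X D : 'I_n -> L -> L)
    (N : {pred L}) : Prop :=
  [/\ 0 \in N,
      forall a u v, u \in N -> v \in N -> a *: u + v \in N,
      forall i u, u \in N -> X i u \in N &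
      forall i u, u \in N -> D i u \in N].

Definition is_subquotient (n : nat) (L : lmodType CC) (XL DL : 'I_n -> L -> L)
    (M : lmodType CC) (XM DM : 'I_n -> M -> M) : Prop :=
  exists (N : {pred L}) (f : L -> M),
    [/\ is_Dsubmodule XL DL N,
        forall a u v, u \in N -> v \in N -> f (a *: u + v) = a *: f u + f v,
        forall i u, u \in N -> f (XL i u) = XM i (f u),
        forall i u, u \in N -> f (DL i u) = DM i (f u) &
        forall m, exists2 u, u \in N & f u = m].

(* Main.v *)
Require Import Defs.
From HB Require Import structures.
From mathcomp Require Import all_boot all_algebra.
From mathcomp Require Import complex Rstruct mpoly.

Set Implicit Arguments.
Unset Strict Implicit.
Unset Printing Implicit Defensive.
Import GRing.Theory Num.Theory.
Local Open Scope ring_scope.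

Section MS.
Variable n : nat.
Implicit Types (p : {mpoly CC[n]}) (m : 'X_{1..n}).

Lemma msize_leP p d : (forall m, (d <= mdeg m)%N -> p@_m = 0) -> (msize p <= d)%N.
Proof.
move=> H; rewrite msizeE big_seq; apply: (big_ind (fun x => x <= d)%N) => //.
  by move=> x y hx hy; rewrite geq_max hx hy.
move=> m; rewrite mcoeff_msupp => hm; rewrite ltnNge; apply/negP => hd.
by move: hm; rewrite H // eqxx.
Qed.

Lemma mcoeff_ge p m : (msize p <= mdeg m)%N -> p@_m = 0.
Proof. by move=> h; apply: memN_msupp_eq0; apply: msize_mdeg_ge. Qed.

Lemma mdegDU m i : mdeg (m + U_(i))%MM = (mdeg m).+1.
Proof. by rewrite mdegD mdeg1 addn1. Qed.

Lemma msize_derivA p i a e : (msize p <= e)%N ->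
  (msize (mderiv i p + a *: p) <= e)%N.
Proof.
move=> h; apply: msize_leP => m hm.
rewrite mcoeffD mcoeffZ mcoeff_deriv !mcoeff_ge ?mulr0 ?mul0rn ?addr0 //.
  by apply: leq_trans hm.
by rewrite mdegDU; apply: leq_trans (leqW hm).
Qed.

Lemma msize_deriv p i e : (msize p <= e.+1)%N -> (msize (mderiv i p) <= e)%N.
Proof.
move=> h; apply: msize_leP => m hm.
by rewrite mcoeff_deriv mcoeff_ge ?mul0rn // mdegDU; apply: leq_trans h _.
Qed.

Lemma mcoeff_derivA_top p i a d b : (msize p <= d.+1)%N -> mdeg b = d ->
  (mderiv i p + a *: p)@_b = a * p@_b.
Proof.
move=> h hb; rewrite mcoeffD mcoeffZ mcoeff_deriv mcoeff_ge ?mul0rn ?add0r //.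
by rewrite mdegDU hb.
Qed.

End MS.

Section Sub.
Variables (n k : nat) (phi : 'I_k -> {mpoly CC[n]}).
Hypothesis hphi : forall j, phi j \is 1.-homog.
Notation L := (LinSum n k).

Definition cc (j : 'I_k) (i : 'I_n) : CC := (phi j)@_U_(i).
Definition same (j j0 : 'I_k) : bool := [forall i, cc j i == cc j0 i].

Lemma dphi i j : mderiv i (phi j) = (cc j i)%:MP.
Proof.
apply/mpolyP => m; rewrite mcoeff_deriv mcoeffC.
have [->|hm] := eqVneq m 0%MM.
  by rewrite add0m mnm0E mulr1.
rewrite mulr0 (dhomog_nemf_coeff (hphi j)) ?mul0rn //.
by rewrite /= mdegDU eqSS mdeg_eq0.
Qed.

Lemma LinDE i u j : LinD phi i u j = mderiv i (u j) + cc j i *: u j.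
Proof. by rewrite ffunE dphi mul_mpolyC. Qed.

Lemma same_refl j : same j j.
Proof. by apply/forallP. Qed.
Lemma same_sym j j' : same j j' -> same j' j.
Proof. by move/forallP=> h; apply/forallP=> i; rewrite eq_sym. Qed.
Lemma same_trans j1 j2 j3 : same j1 j2 -> same j2 j3 -> same j1 j3.
Proof.
by move/forallP=> h1 /forallP h2; apply/forallP=> i; rewrite (eqP (h1 i)).
Qed.
Lemma same_cc j j' i : same j j' -> cc j i = cc j' i.
Proof. by move/forallP/(_ i)/eqP. Qed.

Definition Op i (a : CC) (u : L) : L := LinD phi i u - a *: u.
Lemma OpE i a u j : Op i a u j = mderiv i (u j) + (cc j i - a) *: u j.
Proof. by rewrite /Op !ffunE dphi mul_mpolyC scalerBl addrA. Qed.

Definition pmul (p : {mpoly CC[n]}) (u : L) : L := [ffun j => p * u j].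
Definition coefvec (b : 'X_{1..n}) (u : L) : L := [ffun j => ((u j)@_b)%:MP].
Definition bc (b : 'X_{1..n}) (j0 : 'I_k) (u : L) : L :=
  [ffun j => if same j j0 then ((u j)@_b)%:MP else 0].

Definition rep (j : 'I_k) : 'I_k := odflt j [pick j' | same j' j].
Lemma rep_same j : same (rep j) j.
Proof. by rewrite /rep; case: pickP => [x //|/(_ j)]; rewrite same_refl. Qed.
Lemma rep_eq j j' : same j j' -> rep j = rep j'.
Proof.
move=> h; rewrite /rep (@eq_pick _ _ (fun x => same x j')); last first.
  move=> x /=; apply/idP/idP => hx; first exact: same_trans hx h.
  by apply: same_trans hx (same_sym h).
by case: pickP => [//|/(_ j')]; rewrite same_refl.
Qed.

Lemma coefvec_bc b u :
  coefvec b u = \sum_(j0 | rep j0 == j0) bc b j0 u.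
Proof.
apply/ffunP => j; rewrite sum_ffunE !ffunE.
rewrite (eq_bigr (fun j0 => if same j j0 then ((u j)@_b)%:MP else 0));
  last by move=> j0 _; rewrite ffunE.
rewrite -big_mkcondr /= (big_pred1 (rep j)) // => j0 /=.
apply/idP/idP.
  case/andP => /eqP h1 h2; apply/eqP.
  by rewrite -h1; apply: rep_eq; apply: same_sym.
move/eqP => ->; rewrite (rep_eq (rep_same j)) eqxx /=.
exact: same_sym (rep_same j).
Qed.

Variable N : {pred L}.
Hypothesis hN : is_Dsubmodule (@LinX n k) (LinD phi) N.

Lemma N0 : 0 \in N. Proof. by case: hN. Qed.
Lemma NZD a u v : u \in N -> v \in N -> a *: u + v \in N.
Proof. by case: hN => _ h _ _; apply: h. Qed.
Lemma NX i u : u \in N -> LinX i u \in N.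
Proof. by case: hN => _ _ h _; apply: h. Qed.
Lemma ND i u : u \in N -> LinD phi i u \in N.
Proof. by case: hN => _ _ _ h; apply: h. Qed.
Lemma NZ a u : u \in N -> a *: u \in N.
Proof. by move=> h; rewrite -[_ *: _]addr0; apply: NZD => //; apply: N0. Qed.
Lemma NDD u v : u \in N -> v \in N -> u + v \in N.
Proof. by move=> h1 h2; rewrite -[u]scale1r; apply: NZD. Qed.
Lemma NB u v : u \in N -> v \in N -> u - v \in N.
Proof. by move=> h1 h2; rewrite addrC -scaleN1r; apply: NZD. Qed.
Lemma Nsum (I : Type) (r : seq I) (P : pred I) (F : I -> L) :
  (forall i, P i -> F i \in N) -> \sum_(i <- r | P i) F i \in N.
Proof.
move=> h; apply: (big_ind (fun x => x \in N)) => //; first exact: N0.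
exact: NDD.
Qed.
Lemma NOp i a u : u \in N -> Op i a u \in N.
Proof. by move=> h; apply: NB; [apply: ND | apply: NZ]. Qed.

Lemma Npmul p u : u \in N -> pmul p u \in N.
Proof.
have Hm : forall m u, u \in N -> pmul 'X_[m] u \in N.
  move=> m; rewrite mpolyXE_id.
  elim/big_rec: _ => [|i q _ IH] v hv.
    have -> : pmul 1 v = v by apply/ffunP => j; rewrite ffunE mul1r.
    done.
  have -> : pmul ('X_i ^+ m i * q) v = pmul ('X_i ^+ m i) (pmul q v).
    by apply/ffunP => j; rewrite !ffunE mulrA.
  move: (IH v hv); move: (pmul q v); elim: (m i) => [|e IHe] w hw.
    have -> : pmul ('X_i ^+ 0) w = w by apply/ffunP => j; rewrite ffunE mul1r.
    done.
  have -> : pmul ('X_i ^+ e.+1) w = LinX i (pmul ('X_i ^+ e) w).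
    by apply/ffunP => j; rewrite !ffunE exprS mulrA.
  by apply: NX; apply: IHe.
move=> hu; rewrite [p]mpolyE.
have -> : pmul (\sum_(m <- msupp p) p@_m *: 'X_[m]) u =
          \sum_(m <- msupp p) p@_m *: pmul 'X_[m] u.
  apply/ffunP => j; rewrite ffunE mulr_suml sum_ffunE; apply: eq_bigr => m _.
  by rewrite !ffunE scalerAl.
by apply: Nsum => m _; apply: NZ; apply: Hm.
Qed.


Definition Kill (j0 : 'I_k) (s : seq 'I_k) (u : L) : L :=
  foldr (fun j' v => if [pick i | cc j' i != cc j0 i] is Some i
                     then Op i (cc j' i) v else v) u s.

Lemma Kill_spec j0 d u : u \in N -> (forall j, msize (u j) <= d.+1)%N ->
  forall s,
  [/\ Kill j0 s u \in N, forall j, (msize (Kill j0 s u j) <= d.+1)%N,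
      exists2 ka : CC, ka != 0 & forall j b, same j j0 -> mdeg b = d ->
                          (Kill j0 s u j)@_b = ka * (u j)@_b
    & forall j, j \in s -> ~~ same j j0 -> (msize (Kill j0 s u j) <= d)%N].
Proof.
move=> hu hs; elim => [|j' s [IH1 IH2 [ka hka IH3] IH4]] /=.
  split => //; exists 1; first exact: oner_neq0.
  by move=> j b _ _; rewrite mul1r.
case: pickP => [i hi|hnone].
  split.
  - exact: NOp.
  - by move=> j; rewrite OpE; apply: msize_derivA.
  - exists ((cc j0 i - cc j' i) * ka).
      by rewrite mulf_neq0 // subr_eq0 eq_sym.
    move=> j b hj hb; rewrite OpE (mcoeff_derivA_top _ _ (IH2 j) hb).
    by rewrite IH3 // (same_cc i hj) mulrA.
  - move=> j; rewrite inE => /orP [/eqP ->|hjs] hnj; rewrite OpE.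
      rewrite subrr scale0r addr0; exact: msize_deriv.
    by apply: msize_derivA; apply: IH4.
split => //; first by exists ka.
move=> j; rewrite inE => /orP [/eqP ->|hjs] hnj; last exact: IH4.
by exfalso; move/negP: hnj; apply; apply/forallP => i; move: (hnone i) => /= /negbFE.
Qed.


Lemma scale_mpolyC (a c : CC) : a *: (c%:MP : {mpoly CC[n]}) = (a * c)%:MP.
Proof. by rewrite -mul_mpolyC -mpolyCM. Qed.

Lemma ML_d d : forall u, u \in N -> (forall j, msize (u j) <= d)%N ->
  forall b j0, bc b j0 u \in N.
Proof.
elim: d => [|d IH] u hu hs b j0.
  have -> : bc b j0 u = 0.
    apply/ffunP => j; rewrite !ffunE.
    have /eqP -> : u j == 0 by rewrite -msize_poly_eq0 -leqn0.
    by rewrite mcoeff0 mpolyC0; case: ifP.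
  exact: N0.
have Top : forall b, mdeg b = d -> forall j0, bc b j0 u \in N.
  move=> {}b hb {}j0.
  have [hK1 hK2 [ka hka hK3] hK4] := Kill_spec j0 hu hs (enum 'I_k).
  set z := Kill j0 (enum 'I_k) u in hK1 hK2 hK3 hK4.
  case: d IH hs hb hK2 hK3 hK4 => [|d] IH hs hb hK2 hK3 hK4.
    have hb0 : b = 0%MM by apply/eqP; rewrite -mdeg_eq0 hb.
    have -> : bc b j0 u = ka^-1 *: z.
      apply/ffunP => j; rewrite !ffunE; case: ifP => hj.
        rewrite (msize1_polyC (hK2 j)) hb0 hK3 ?mdeg0 //.
        by apply/mpolyP => m; rewrite mcoeffZ !mcoeffC mulrA mulrA mulVf // mul1r.
      have /eqP -> : z j == 0.
        by rewrite -msize_poly_eq0 -leqn0; apply: hK4; rewrite ?mem_enum ?hj.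
      by rewrite scaler0.
    exact: NZ.
  have [i hi] : exists i, b i != 0%N.
    case: (pickP (fun i => b i != 0%N)) => [i1 hi1|h]; first by exists i1.
    have hb0 : b = 0%MM.
      by apply/mnmP => i1; rewrite mnm0E; apply/eqP; move: (h i1) => /= /negbFE.
    by move: hb; rewrite hb0 mdeg0.
  set g := (b - U_(i))%MM.
  have hg : (g + U_(i))%MM = b by rewrite /g submK // lep1mP.
  set y := Op i (cc j0 i) z.
  have hy : y \in N by apply: NOp.
  have hys : forall j, (msize (y j) <= d.+1)%N.
    move=> j; rewrite /y OpE; case hj: (same j j0).
      by rewrite (same_cc i hj) subrr scale0r addr0; apply: msize_deriv.
    by apply: msize_derivA; apply: hK4; rewrite ?mem_enum ?hj.
  have := IH y hy hys g j0.
  have -> : bc g j0 y = (ka * (g i).+1%:R) *: bc b j0 u.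
    apply/ffunP => j; case hj: (same j j0); last by rewrite !ffunE hj scaler0.
    have hyj : y j = mderiv i (z j) by rewrite /y OpE (same_cc i hj) subrr scale0r addr0.
    rewrite ffunE hj hyj !ffunE hj mcoeff_deriv hg hK3 //.
    by rewrite -mul_mpolyC -mpolyCM mulr_natr mulrnAl.
  move=> h; have hne : ka * (g i).+1%:R != 0 by rewrite mulf_neq0 // pnatr_eq0.
  by rewrite -(scalerK hne (bc b j0 u)); apply: NZ.
have [hbd|hbd] := leqP d.+1 (mdeg b).
  have -> : bc b j0 u = 0.
    by apply/ffunP => j; rewrite !ffunE mcoeff_ge ?mpolyC0; [case: ifP|exact: leq_trans (hs j) hbd].
  exact: N0.
rewrite ltnS leq_eqVlt in hbd; case/orP: hbd => [/eqP hbd|hbd]; first exact: Top.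
set r := u - \sum_(m : 'X_{1..n < d.+1} | mdeg m == d) pmul 'X_[m] (coefvec m u).
have hr : r \in N.
  apply: NB => //; apply: Nsum => m /eqP hm; apply: Npmul.
  by rewrite coefvec_bc; apply: Nsum => j1 _; apply: Top.
have hrc : forall j m0, (r j)@_m0 = if mdeg m0 == d then 0 else (u j)@_m0.
  move=> j m0; rewrite /r !ffunE sum_ffunE mcoeffB raddf_sum /=.
  rewrite (eq_bigr (fun m : 'X_{1..n < d.+1} => (u j)@_m * ((m : 'X_{1..n}) == m0)%:R));
    last by move=> m _; rewrite !ffunE mulrC mul_mpolyC mcoeffZ mcoeffX.
  case: ifP => hm0.
    have hlt : (mdeg m0 < d.+1)%N by rewrite (eqP hm0).
    rewrite (bigD1 (BMultinom hlt)) /= ?hm0 // eqxx mulr1 big1 ?addr0 ?subrr //.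
    move=> m /andP [_ hm]; suff -> : ((m : 'X_{1..n}) == m0) = false by rewrite mulr0.
    apply/negbTE.
    by apply: contra hm => /eqP hmm; apply/eqP/val_inj.
  rewrite big1 ?subr0 // => m /eqP hm; case: eqP => [hmm|_]; last by rewrite mulr0.
  by move: hm0; rewrite -hmm hm eqxx.
have hrs : forall j, (msize (r j) <= d)%N.
  move=> j; apply: msize_leP => m0 hm0.
  apply: etrans (hrc j m0) _; case: ifP => // hne.
  apply: mcoeff_ge; apply: leq_trans (hs j) _.
  by rewrite ltn_neqAle eq_sym hne hm0.
have := IH r hr hrs b j0.
have -> // : bc b j0 r = bc b j0 u.
apply/ffunP => j; rewrite [bc b j0 r j]ffunE [bc b j0 u j]ffunE; case: ifP => // _.
by rewrite hrc ifF // ltn_eqF.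
Qed.

Lemma ML u : u \in N -> forall b j0, bc b j0 u \in N.
Proof.
move=> hu; apply: (@ML_d (\max_j msize (u j))) => // j.
by rewrite (bigD1 j) //= leq_maxl.
Qed.

Lemma MLc u : u \in N -> forall b, coefvec b u \in N.
Proof. by move=> hu b; rewrite coefvec_bc; apply: Nsum => j0 _; apply: ML. Qed.

End Sub.

Lemma lin0 (U V : lmodType CC) (g : U -> V) : lin g -> g 0 = 0.
Proof.
move=> h; have := h 1 0 0; rewrite !scale1r addr0 => e.
by apply: (@addrI _ (g 0)); rewrite addr0 -e.
Qed.

Section Final.
Variables (n k : nat) (phi : 'I_k -> {mpoly CC[n]}).
Hypothesis hphi : forall j, phi j \is 1.-homog.
Notation L := (LinSum n k).
Variables (M : lmodType CC) (XM DM : 'I_n -> M -> M).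
Hypothesis hXM : forall i, lin (XM i).
Hypothesis hDM : forall i, lin (DM i).
Variable N : {pred L}.
Hypothesis hN : is_Dsubmodule (@LinX n k) (LinD phi) N.
Variable f : L -> M.
Hypothesis hf1 : forall a u v, u \in N -> v \in N -> f (a *: u + v) = a *: f u + f v.
Hypothesis hf2 : forall i u, u \in N -> f (LinX i u) = XM i (f u).
Hypothesis hf3 : forall i u, u \in N -> f (LinD phi i u) = DM i (f u).
Hypothesis hf4 : forall m, exists2 u, u \in N & f u = m.

Lemma f0 : f 0 = 0.
Proof.
have := hf1 1 (N0 hN) (N0 hN); rewrite !scale1r addr0 => e.
by apply: (@addrI _ (f 0)); rewrite addr0 -e.
Qed.

Lemma fD u v : u \in N -> v \in N -> f (u + v) = f u + f v.
Proof. by move=> hu hv; have := hf1 1 hu hv; rewrite !scale1r. Qed.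

Lemma fB u v : u \in N -> v \in N -> f (u - v) = f u - f v.
Proof. by move=> hu hv; have := hf1 (-1) hv hu; rewrite !scaleN1r addrC [_ + f u]addrC. Qed.

Definition K : {pred L} := [pred u | (u \in N) && (f u == 0)].

Lemma hK : is_Dsubmodule (@LinX n k) (LinD phi) K.
Proof.
split.
- by rewrite inE (N0 hN) f0 eqxx.
- move=> a u v; rewrite !inE => /andP [hu /eqP fu] /andP [hv /eqP fv].
  by rewrite (NZD hN) // hf1 // fu fv scaler0 addr0 eqxx.
- move=> i u; rewrite !inE => /andP [hu /eqP fu].
  by rewrite (NX hN) // hf2 // fu (lin0 (hXM i)) eqxx.
- move=> i u; rewrite !inE => /andP [hu /eqP fu].
  by rewrite (ND hN) // hf3 // fu (lin0 (hDM i)) eqxx.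
Qed.

Definition Fam r (w : 'I_r -> L) (bl : 'I_r -> 'I_k) : Prop :=
  [/\ forall l, w l \in N,
      forall l j, w l j = ((w l j)@_0)%:MP,
      forall l j, w l j != 0 -> same phi j (bl l) &
      forall a : 'I_r -> CC, (\sum_l a l *: w l) \in K -> forall l, a l = 0].

Definition Span r (w : 'I_r -> L) : Prop :=
  forall j0 v, v \in N -> (forall j, v j = ((v j)@_0)%:MP) ->
    (forall j, v j != 0 -> same phi j j0) ->
    exists a : 'I_r -> CC, v - \sum_l a l *: w l \in K.


Lemma Fam_bound r w bl : @Fam r w bl -> (r <= k)%N.
Proof.
case=> hw hc hb hi; rewrite leqNgt; apply/negP => hlt.
pose A : 'M[CC]_(r, k) := \matrix_(l, j) (w l j)@_0.
have hker : kermx A != 0.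
  rewrite -mxrank_eq0 mxrank_ker subn_eq0 -ltnNge.
  exact: leq_ltn_trans (rank_leq_col A) hlt.
have [i [j hij]] : exists i j, kermx A i j != 0.
  case: (pickP (fun ij : 'I_r * 'I_r => kermx A ij.1 ij.2 != 0)) => [[i j] h|h].
    by exists i, j.
  exfalso; move/eqP: hker; apply; apply/matrixP => i j.
  by move: (h (i, j)) => /= /negbFE /eqP ->; rewrite mxE.
pose v := row i (kermx A).
have hv : v *m A = 0 by apply/sub_kermxP; apply: row_sub.
have := hi (fun l => v 0 l).
have -> : \sum_l v 0 l *: w l = 0.
  apply/ffunP => j'; rewrite sum_ffunE !ffunE.
  have e : \sum_l v 0 l * (w l j')@_0 = 0.
    have := congr1 (fun B : 'M_(1, k) => B 0 j') hv; rewrite /= mxE => h.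
    rewrite mxE in h; rewrite -[RHS]h; apply: eq_bigr => l _; by rewrite [A l j']mxE.
  apply/mpolyP => m; rewrite mcoeff0 raddf_sum /=.
  rewrite (eq_bigr (fun l => v 0 l * (w l j')@_0 * (m == 0%MM)%:R)); last first.
    by move=> l _; rewrite ffunE mcoeffZ {1}(hc l j') mcoeffC mulrA.
  by rewrite -mulr_suml e mul0r.
move=> /(_ _ j); rewrite inE (N0 hN) f0 eqxx => /(_ isT) /eqP.
by rewrite mxE (negbTE hij).
Qed.


Lemma K_Z a u : u \in K -> a *: u \in K.
Proof. by move=> h; rewrite -[_ *: _]addr0; apply: (NZD hK) => //; apply: (N0 hK). Qed.

Lemma Fam_extend r w bl : @Fam r w bl -> ~ @Span r w ->
  exists w' bl', @Fam r.+1 w' bl'.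
Proof.
move=> [hw hc hb hi] hS.
have [j0 [v [hv1 hv2 hv3 hv4]]] : exists j0 v, [/\ v \in N,
    (forall j, v j = ((v j)@_0)%:MP), (forall j, v j != 0 -> same phi j j0) &
    forall a : 'I_r -> CC, v - \sum_l a l *: w l \notin K].
  apply: Classical_Prop.NNPP => H; apply: hS => j0 v h1 h2 h3.
  apply: Classical_Prop.NNPP => H2; apply: H; exists j0, v; split => // a.
  by apply/negP => ha; apply: H2; exists a.
pose w' (l : 'I_r.+1) := if unlift ord_max l is Some l' then w l' else v.
pose bl' (l : 'I_r.+1) := if unlift ord_max l is Some l' then bl l' else j0.
have hw' : forall l : 'I_r, w' (widen_ord (leqnSn r) l) = w l.
  move=> l; rewrite /w'.
  have -> : widen_ord (leqnSn r) l = lift ord_max l by apply: val_inj; exact: (esym (lift_max l)).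
  by rewrite liftK.
have hwm : w' ord_max = v by rewrite /w' unlift_none.
exists w', bl'; split.
- by move=> l; rewrite /w'; case: unliftP => [l' _|_].
- by move=> l j; rewrite /w'; case: unliftP => [l' _|_].
- by move=> l j; rewrite /w' /bl'; case: unliftP => [l' _|_]; [apply: hb|apply: hv3].
move=> a; rewrite big_ord_recr /= hwm.
rewrite (eq_bigr (fun l => a (widen_ord (leqnSn r) l) *: w l)); last first.
  by move=> l _; rewrite hw'.
move=> hK'.
have ham : a ord_max = 0.
  apply: Classical_Prop.NNPP => hne; move/eqP: hne => hne.
  move: (hv4 (fun l => - (a (widen_ord (leqnSn r) l) / a ord_max))).
  suff -> : v - \sum_l - (a (widen_ord (leqnSn r) l) / a ord_max) *: w l =
            (a ord_max)^-1 *: (\sum_l a (widen_ord (leqnSn r) l) *: w l + a ord_max *: v).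
    by rewrite K_Z.
  rewrite scalerDr scalerA mulVf // scale1r addrC; congr (_ + _).
  rewrite scaler_sumr -sumrN; apply: eq_bigr => l _.
  by rewrite scalerA scaleNr opprK mulrC.
rewrite ham scale0r addr0 in hK'.
have hi' := hi _ hK'.
move=> l; case: (unliftP ord_max l) => [l' ->|->] //.
have -> : lift ord_max l' = widen_ord (leqnSn r) l' by apply: val_inj; exact: (lift_max l').
exact: hi'.
Qed.

Lemma Fam_exists : exists r w bl, @Fam r w bl /\ @Span r w.
Proof.
suff H : forall t r w bl, @Fam r w bl -> (k - r <= t)%N ->
    exists r w bl, @Fam r w bl /\ @Span r w.
  apply: (H k 0 (fun l => 0) (fun l => match l with Ordinal _ h => False_rect _ (notF h) end)).
    split.
    - by move=> [].
    - by move=> [].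
    - by move=> [].
    - by move=> a _ [].
  exact: leq_subr.
elim=> [|t IH] r w bl hF ht; (case: (Classical_Prop.classic (@Span r w)) => hS;
  first by exists r, w, bl); have [w' [bl' hF']] := Fam_extend hF hS;
  have hb := Fam_bound hF'.
  by move: ht; rewrite leqn0 subn_eq0 leqNgt hb.
apply: (IH _ _ _ hF'); rewrite subnS; move: ht.
by case: (k - r)%N.
Qed.


Section PsiSec.
Variables (r : nat) (w : 'I_r -> L) (bl : 'I_r -> 'I_k).
Hypothesis hF : @Fam r w bl.
Hypothesis hSp : @Span r w.

Definition sumw (p : LinSum n r) : L := \sum_l pmul (p l) (w l).
Definition Psi (p : LinSum n r) : M := f (sumw p).
Definition phi' (l : 'I_r) := phi (bl l).

Lemma sumwE p j : sumw p j = \sum_l p l * w l j.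
Proof. by rewrite sum_ffunE; apply: eq_bigr => l _; rewrite ffunE. Qed.

Lemma sumw_N p : sumw p \in N.
Proof. case: hF => hw _ _ _; apply: (Nsum hN) => l _; apply: (Npmul hN); exact: hw. Qed.

Lemma sumw_lin a p q : sumw (a *: p + q) = a *: sumw p + sumw q.
Proof.
apply/ffunP => j; rewrite [LHS]sumwE !ffunE !sumwE.
rewrite (eq_bigr (fun l => a *: (p l * w l j) + q l * w l j)); last first.
  by move=> l _; rewrite !ffunE mulrDl scalerAl.
by rewrite big_split /= -scaler_sumr.
Qed.

Lemma sumwX i p : sumw (LinX i p) = LinX i (sumw p).
Proof.
apply/ffunP => j; rewrite sumwE ffunE sumwE mulr_sumr.
by apply: eq_bigr => l _; rewrite ffunE mulrA.
Qed.

Lemma sumwD i p : sumw (LinD phi' i p) = LinD phi i (sumw p).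
Proof.
case: hF => _ hc hb _.
apply/ffunP => j; rewrite sumwE ffunE sumwE raddf_sum mulr_sumr -big_split /=.
apply: eq_bigr => l _; rewrite ffunE mderivM.
have -> : mderiv i (w l j) = 0 by rewrite hc mderivC.
rewrite mulr0 addr0.
have [->|hne] := eqVneq (w l j) 0; first by rewrite !mulr0 addr0.
rewrite /phi' (dphi hphi i (bl l)) (dphi hphi i j) (same_cc i (hb _ _ hne)).
by rewrite mulrDl mulrA.
Qed.

Lemma Psi_hom : is_Dhom (@LinX n r) (LinD phi') XM DM Psi.
Proof.
split.
- by move=> a p q; rewrite /Psi sumw_lin hf1 //; apply: sumw_N.
- by move=> i p; rewrite /Psi sumwX hf2 //; apply: sumw_N.
- by move=> i p; rewrite /Psi sumwD hf3 //; apply: sumw_N.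
Qed.


Lemma mcoeffMC (p : {mpoly CC[n]}) c b : (p * c%:MP)@_b = p@_b * c.
Proof. by rewrite mulrC mul_mpolyC mcoeffZ mulrC. Qed.

Lemma Psi_inj : injective Psi.
Proof.
move=> p q e.
case: hF => hw hc hb hi.
set u := sumw p - sumw q.
have hu : u \in K.
  rewrite inE (NB hN) ?sumw_N //=; apply/eqP.
  by rewrite /u fB ?sumw_N // -/(Psi p) -/(Psi q) e subrr.
have key : forall b, coefvec b u = \sum_l ((p l - q l)@_b) *: w l.
  move=> b; apply/ffunP => j; rewrite sum_ffunE ffunE.
  have -> : u j = sumw p j - sumw q j by rewrite /u !ffunE.
  rewrite !sumwE -sumrB.
  apply/mpolyP => m; rewrite mcoeffC !raddf_sum /= mulr_suml; apply: eq_bigr => l _.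
  rewrite ffunE mcoeffZ -mulrBl.
  move: (hc l j); set c := (w l j)@_0 => ->.
  by rewrite mcoeffMC mcoeffC mulrA.
move=> {e}; apply/ffunP => l; apply/mpolyP => b; apply/eqP; rewrite -subr_eq0 -mcoeffB.
apply/eqP; move: l; apply: hi; rewrite -key.
exact: (MLc hphi hK hu).
Qed.

Lemma pmul_sum (I : Type) (s : seq I) (P : pred I) (F : I -> L) x :
  pmul x (\sum_(i <- s | P i) F i) = \sum_(i <- s | P i) pmul x (F i).
Proof.
apply/ffunP => j; rewrite ffunE !sum_ffunE mulr_sumr.
by apply: eq_bigr => i _; rewrite ffunE.
Qed.

Lemma Psi_surj m : exists p, Psi p = m.
Proof.
have [u hu <-] := hf4 m.
have [hPl _ _] := Psi_hom.
pose Img x := x \in N /\ exists p, Psi p = f x.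
have ImgS : forall (I : Type) (s : seq I) (P : pred I) (F : I -> L),
    (forall i, P i -> Img (F i)) -> Img (\sum_(i <- s | P i) F i).
  move=> I s P F h; apply: (big_ind Img) => //.
    split; first exact: (N0 hN).
    by exists 0; rewrite (lin0 hPl) f0.
  move=> x y [hx [p1 e1]] [hy [p2 e2]]; split; first exact: (NDD hN).
  exists (p1 + p2); rewrite fD // -e1 -e2.
  by have := hPl 1 p1 p2; rewrite !scale1r.
set d := (\max_j msize (u j))%N.
have hs : forall j, (msize (u j) <= d)%N by move=> j; rewrite /d (bigD1 j) //= leq_maxl.
have dec : u = \sum_(b : 'X_{1..n < d}) \sum_(j0 | rep phi j0 == j0)
                  pmul 'X_[b] (bc phi b j0 u).
  rewrite (eq_bigr (fun b : 'X_{1..n < d} => pmul 'X_[b] (coefvec b u))); last first.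
    by move=> b _; rewrite (coefvec_bc phi) pmul_sum.
  apply/ffunP => j; rewrite sum_ffunE {1}(mpolywE (hs j)).
  by apply: eq_bigr => b _; rewrite !ffunE mulrC mul_mpolyC.
suff [_ [p hp]] : Img u by exists p.
rewrite dec; apply: (ImgS) => b _; apply: (ImgS) => j0 _.
have hv := ML hphi hN hu b j0.
split; first exact: (Npmul hN).
have [a ha] : exists a : 'I_r -> CC, bc phi b j0 u - \sum_l a l *: w l \in K.
  apply: (hSp (j0:=j0) hv) => j; rewrite ffunE.
    by case: ifP => _; rewrite ?mcoeffC ?eqxx ?mulr1 // mcoeff0 mpolyC0.
  by case: ifP => [h _|_] //; rewrite eqxx.
have hwN : \sum_l a l *: w l \in N.
  by case: hF => hw _ _ _; apply: (Nsum hN) => l _; apply: (NZ hN).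
have := Npmul hK 'X_[b] ha; rewrite inE => /andP [_ /eqP h0].
have e2 : pmul 'X_[b] (bc phi b j0 u - \sum_l a l *: w l) =
          pmul 'X_[b] (bc phi b j0 u) - pmul 'X_[b] (\sum_l a l *: w l).
  by apply/ffunP => j; rewrite !ffunE mulrBr.
rewrite e2 fB in h0; try by apply: (Npmul hN).
move/eqP: h0; rewrite subr_eq0 => /eqP ->.
exists [ffun l => a l *: 'X_[b]]; rewrite /Psi; congr (f _).
apply/ffunP => j; rewrite sumwE ffunE sum_ffunE mulr_sumr.
by apply: eq_bigr => l _; rewrite !ffunE -scalerAl -scalerAr.
Qed.

End PsiSec.

Lemma final_lin : is_linear_module XM DM.
Proof.
have [r [w [bl [hF hS]]]] := Fam_exists.
exists r, (phi' bl), (Psi w); split.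
- by move=> l; apply: hphi.
- exact: Psi_hom.
have hsurj : forall m, exists p, Psi w p == m.
  by move=> m; have [p hp] := Psi_surj hF hS m; exists p; apply/eqP.
exists (fun m => xchoose (hsurj m)).
  by move=> p; apply: (Psi_inj hF); apply/eqP; apply: (xchooseP (hsurj (Psi w p))).
by move=> m; apply/eqP; apply: (xchooseP (hsurj m)).
Qed.

End Final.

Theorem mainTheorem3 (n : nat)
    (L : lmodType CC) (XL DL : 'I_n -> L -> L)
    (M : lmodType CC) (XM DM : 'I_n -> M -> M) :
  is_linear_module XL DL ->
  is_Dmodule XM DM ->
  is_subquotient XL DL XM DM ->
  is_linear_module XM DM.
Proof.
move=> [k [phi [g [hphi [hg1 hg2 hg3] hgb]]]] [hXM hDM _ _ _].
move=> [N [f [[hN0 hNZ hNX hND] hf1 hf2 hf3 hf4]]].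
have g0 : g 0 = 0 by apply: lin0.
pose N' : {pred LinSum n k} := [pred u | g u \in N].
have hN' : is_Dsubmodule (@LinX n k) (LinD phi) N'.
  split.
  - by rewrite inE g0.
  - by move=> a u v; rewrite !inE hg1 => hu hv; apply: hNZ.
  - by move=> i u; rewrite !inE hg2 => hu; apply: hNX.
  - by move=> i u; rewrite !inE hg3 => hu; apply: hND.
apply: (@final_lin n k phi hphi M XM DM hXM hDM N' hN' (fun u => f (g u))).
- by move=> a u v hu hv; rewrite hg1 hf1.
- by move=> i u hu; rewrite hg2 hf2.
- by move=> i u hu; rewrite hg3 hf3.
- move=> m; have [u hu <-] := hf4 m.
  case: hgb => g' hgg' hg'g.
  by exists (g' u); rewrite ?inE hg'g.
Qed.
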